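(* For every $W\in\mathrm{Gr}^{ad}$, $L_W=(R_W)'$, i.e. $L_W=\{q\in Q: qR_W\subset A_1\}$.
   Context: $A_1=\mathbb C[z,\partial]$, $\partial=d/dz$, with quotient skew field $Q\supset\mathbb C(z)[\partial]$. $\mathrm{Gr}^{ad}$: subspaces $W=m_V^{-1}V\subset\mathbb C(z)$ where $V\subset\mathbb C[z]$ is a finite intersection of subspaces $V_\lambda\supset(z-\lambda)^{r}\mathbb C[z]$ (distinct $\lambda$) and $m_V=\prod(z-\lambda)^{\dim\mathbb C[z]/V_\lambda}$. $R_W=\{D\in\mathbb C(z)[\partial]: D.\mathbb C[z]\subset W\}$, $L_W=\{D\in\mathbb C(z)[\partial]: D.W\subset\mathbb C[z]\}$. It is known (Cannings–Holland) that $W=\{D.1: D\in R_W\}$. *)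

(* Defs.v *)
From mathcomp Require Import all_boot all_order all_algebra.
From mathcomp Require Import complex Rstruct.
Set Implicit Arguments. Unset Strict Implicit. Unset Printing Implicit Defensive.
Import Order.TTheory GRing.Theory Num.Theory.
Local Open Scope ring_scope.

Definition CC : closedFieldType := (Rdefinitions.R)[i].

Notation Cz := {fraction {poly CC}}.

Notation "x %:F" := (@FracField.tofrac _ x) : ring_scope.

Definition fderiv (f : Cz) : Cz :=
  let r := repr f in
  ((\n_r)^`() * \d_r - \n_r * (\d_r)^`())%:F / ((\d_r) ^+ 2)%:F.

(* An element D = \sum_i D`_i ∂^i of ℂ(z)[∂] is encoded by its (finite) sequence of
   coefficients, stored as a {poly Cz} (only used as a coefficient container: the
   ring product of ℂ(z)[∂] is [dmul] below, NOT the polynomial product). *)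
Notation DOp := {poly Cz}.

Definition dact (D : DOp) (f : Cz) : Cz :=
  \sum_(i < size D) D`_i * iter i fderiv f.

Definition dmul (P R : DOp) : DOp :=
  \sum_(i < size P) \sum_(k < size R) \sum_(l < i.+1)
     ('C(i, l)%:R * P`_i * iter l fderiv R`_k) *: 'X^(i + k - l).

Definition in_A1 (D : DOp) : Prop := forall i, exists p : {poly CC}, D`_i = p%:F.

Definition is_subspace (V : {poly CC} -> Prop) : Prop :=
  V 0 /\ (forall p q, V p -> V q -> V (p + q)) /\ (forall (c : CC) p, V p -> V (c *: p)).

(* dim_ℂ (ℂ[z]/V) = n : there are n polynomials whose classes form a basis of ℂ[z]/V. *)
Definition codim_is (V : {poly CC} -> Prop) (n : nat) : Prop :=
  exists ps : 'I_n -> {poly CC},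
    (forall c : 'I_n -> CC, V (\sum_i c i *: ps i) -> forall i, c i = 0) /\
    (forall p, exists c : 'I_n -> CC, V (p - \sum_i c i *: ps i)).

(* W ∈ Gr^ad : W = m_V^{-1} V, V = ∩_{λ ∈ lams} V_λ (distinct λ),
   (z-λ)^r ℂ[z] ⊂ V_λ, m_V = ∏ (z-λ)^{dim ℂ[z]/V_λ}. *)
Definition in_Grad (W : Cz -> Prop) : Prop :=
  exists (lams : seq CC) (Vs : CC -> {poly CC} -> Prop) (ns : CC -> nat),
    uniq lams /\
    (forall l, l \in lams ->
       is_subspace (Vs l) /\
       (exists r : nat, forall p : {poly CC}, Vs l (('X - l%:P) ^+ r * p)) /\
       codim_is (Vs l) (ns l)) /\
    (forall f : Cz, W f <->
       exists v : {poly CC}, (forall l, l \in lams -> Vs l v) /\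
         f = v%:F / (\prod_(l <- lams) ('X - l%:P) ^+ ns l)%:F).

Definition R_W (W : Cz -> Prop) (D : DOp) : Prop :=
  forall p : {poly CC}, W (dact D p%:F).
Definition L_W (W : Cz -> Prop) (D : DOp) : Prop :=
  forall f, W f -> exists p : {poly CC}, dact D f = p%:F.

(* (Q, j) is "the" quotient skew field of A_1, together with the inclusion
   j : ℂ(z)[∂] ↪ Q: Q is a division ring, j is an injective ring morphism, and every
   element of Q is a right fraction a s^{-1} of elements of A_1 (classical Ore
   quotient ring; unique up to isomorphism). *)
Definition is_quot_skew_field (Q : unitRingType) (j : DOp -> Q) : Prop :=
  (forall x : Q, x != 0 -> x \is a GRing.unit) /\
  injective j /\
  j 1 = 1 /\
  (forall x y, j (x + y) = j x + j y) /\
  (forall x y, j (dmul x y) = j x * j y) /\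
  (forall q : Q, exists a s, in_A1 a /\ in_A1 s /\ s != 0 /\ q = j a * (j s)^-1).

(* Main.v *)
Require Import Defs.
From mathcomp Require Import all_boot all_order all_algebra.
From mathcomp Require Import complex Rstruct.
From mathcomp Require Import ring.
Set Implicit Arguments. Unset Strict Implicit. Unset Printing Implicit Defensive.
Import Order.TTheory GRing.Theory Num.Theory.
Local Open Scope ring_scope.


Lemma gdD (F : fieldType) (A B C E A' B' C' E' : F) : B != 0 -> E != 0 ->
  ((A' * E + A * E' + (C' * B + C * B')) * (B * E) - (A * E + C * B) * (B' * E + B * E')) / (B * E) ^+ 2
  = (A' * B - A * B') / B ^+ 2 + (C' * E - C * E') / E ^+ 2.
Proof. by move=> HB HE; field; rewrite HB HE. Qed.

Lemma gdM (F : fieldType) (A B C E A' B' C' E' : F) : B != 0 -> E != 0 ->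
  ((A' * C + A * C') * (B * E) - A * C * (B' * E + B * E')) / (B * E) ^+ 2 =
  (A' * B - A * B') / B ^+ 2 * (C / E) + A / B * ((C' * E - C * E') / E ^+ 2).
Proof. by move=> HB HE; field; rewrite HB HE. Qed.

Lemma sumrDD (V : zmodType) (I : Type) (r : seq I) (P : pred I) (F1 F2 : I -> V) :
  \sum_(i <- r | P i) (F1 i + F2 i) = \sum_(i <- r | P i) F1 i + \sum_(i <- r | P i) F2 i.
Proof. exact: big_split. Qed.

Section Gen.
Variable K : fieldType.
Notation Fz := {fraction {poly K}}.
Notation "x %:F" := (@FracField.tofrac _ x) : ring_scope.

Definition gderiv (f : Fz) : Fz :=
  let r := repr f in
  ((\n_r)^`() * \d_r - \n_r * (\d_r)^`())%:F / ((\d_r) ^+ 2)%:F.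

Lemma fracE (x : Fz) : x = (\n_(repr x))%:F / (\d_(repr x))%:F.
Proof.
have dn0 : (\d_(repr x))%:F != 0 :> Fz.
  rewrite tofrac_eq0. exact: denom_ratioP.
apply/(mulIf dn0).
rewrite divfK //.
set r := repr x.
rewrite -{1}[x]reprK -/r.
unlock FracField.tofrac.
rewrite -[_ * _]/(FracField.mul _ _) -FracField.pi_mul.
apply/eqmodP => /=.
by rewrite FracField.equivfE /= /FracField.mulf !numden_Ratio ?mulr1 ?oner_neq0 ?denom_ratioP // mulrC.
Qed.

Lemma frac_eq (a b c e : {poly K}) : b != 0 -> e != 0 -> a * e = c * b ->
  a%:F / b%:F = c%:F / e%:F :> Fz.
Proof.
move=> b0 e0 H; apply/eqP; rewrite eqr_div ?tofrac_eq0 //.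
by rewrite -!tofracM H.
Qed.

Lemma gderiv_frac (n d : {poly K}) : d != 0 ->
  gderiv (n%:F / d%:F) = (n^`() * d - n * d^`())%:F / (d ^+ 2)%:F.
Proof.
move=> d0; rewrite /gderiv.
set r := repr _.
have E := fracE (n%:F / d%:F); rewrite -/r in E.
have dr0 : \d_r != 0 by exact: denom_ratioP.
have H : \n_r * d - n * \d_r = 0.
  apply/eqP; rewrite subr_eq0; apply/eqP.
  have := E; move/esym/eqP; rewrite eqr_div ?tofrac_eq0 // -!tofracM tofrac_eq.
  by move/eqP ->; rewrite mulrC.
have H' : (\n_r * d - n * \d_r)^`() = 0 by rewrite H deriv0.
rewrite derivB !derivM in H'.
apply: frac_eq; rewrite ?expf_neq0 //.
apply/eqP; rewrite -subr_eq0; apply/eqP.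
transitivity (\d_r * d * ((\n_r)^`() * d + \n_r * d^`() - (n^`() * \d_r + n * (\d_r)^`()))
   - ((\d_r)^`() * d + \d_r * d^`()) * (\n_r * d - n * \d_r)); first by ring.
by rewrite H H' !(mulr0, subr0).
Qed.

Lemma gderiv_poly (p : {poly K}) : gderiv p%:F = (p^`())%:F.
Proof.
have -> : p%:F = p%:F / 1%:F :> Fz by rewrite tofrac1 divr1.
rewrite gderiv_frac ?oner_neq0 // derivC !mulr1 mulr0 subr0 expr1n tofrac1 divr1.
by [].
Qed.

Lemma gderivD_aux (a b c e : {poly K}) : b != 0 -> e != 0 ->
  gderiv (a%:F / b%:F + c%:F / e%:F) = gderiv (a%:F / b%:F) + gderiv (c%:F / e%:F).
Proof.
move=> b0 e0.
have Fb : b%:F != 0 :> Fz by rewrite tofrac_eq0.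
have Fe : e%:F != 0 :> Fz by rewrite tofrac_eq0.
rewrite (addf_div _ _ Fb Fe).
rewrite -(tofracM a e).
rewrite -(tofracM c b).
rewrite -(tofracM b e).
rewrite -(tofracD (a * e)).
have be0 : b * e != 0 by rewrite mulf_neq0.
rewrite (gderiv_frac _ be0) (gderiv_frac _ b0) (gderiv_frac _ e0).
rewrite !(derivD, derivM).
rewrite !(tofracD, tofracM, tofracN, tofracXn).
move: (a%:F) (b%:F) (c%:F) (e%:F) (a^`()%:F) (b^`()%:F) (c^`()%:F) (e^`()%:F) Fb Fe.
move=> A B C E' A' B' C' E1 HB HE.
exact: (@gdD _ A B C E' A' B' C' E1 HB HE).
Qed.
Lemma gderivM_aux (a b c e : {poly K}) : b != 0 -> e != 0 ->
  gderiv (a%:F / b%:F * (c%:F / e%:F)) =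
  gderiv (a%:F / b%:F) * (c%:F / e%:F) + a%:F / b%:F * gderiv (c%:F / e%:F).
Proof.
move=> b0 e0.
have Fb : b%:F != 0 :> Fz by rewrite tofrac_eq0.
have Fe : e%:F != 0 :> Fz by rewrite tofrac_eq0.
rewrite mulf_div -(tofracM a c) -(tofracM b e).
have be0 : b * e != 0 by rewrite mulf_neq0.
rewrite (gderiv_frac _ be0) (gderiv_frac _ b0) (gderiv_frac _ e0).
rewrite !(derivD, derivM).
rewrite !(tofracD, tofracM, tofracN, tofracXn).
move: (a%:F) (b%:F) (c%:F) (e%:F) (a^`()%:F) (b^`()%:F) (c^`()%:F) (e^`()%:F) Fb Fe.
move=> A B C E' A' B' C' E1 HB HE.
exact: (@gdM _ A B C E' A' B' C' E1 HB HE).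
Qed.
Lemma gderivD (x y : Fz) : gderiv (x + y) = gderiv x + gderiv y.
Proof.
rewrite [x]fracE [y]fracE; apply: gderivD_aux; exact: denom_ratioP.
Qed.

Lemma gderivM (x y : Fz) : gderiv (x * y) = gderiv x * y + x * gderiv y.
Proof.
rewrite [x]fracE [y]fracE; apply: gderivM_aux; exact: denom_ratioP.
Qed.

Definition gdact (D : {poly Fz}) (f : Fz) : Fz :=
  \sum_(i < size D) D`_i * iter i gderiv f.
Definition gdmul (P R : {poly Fz}) : {poly Fz} :=
  \sum_(i < size P) \sum_(k < size R) \sum_(l < i.+1)
     ('C(i, l)%:R * P`_i * iter l gderiv R`_k) *: 'X^(i + k - l).
Lemma gderiv0 : gderiv 0 = 0.
Proof. by rewrite -tofrac0 gderiv_poly deriv0 tofrac0. Qed.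

Lemma gderiv_nat k : gderiv k%:R = 0.
Proof.
by rewrite -(rmorph_nat (@FracField.tofrac _)) gderiv_poly -polyC_natr derivC tofrac0.
Qed.

Lemma gderiv_natM k x : gderiv (k%:R * x) = k%:R * gderiv x.
Proof. by rewrite gderivM gderiv_nat mul0r add0r. Qed.

Lemma iter_gderivD n x y : iter n gderiv (x + y) = iter n gderiv x + iter n gderiv y.
Proof. by elim: n => //= n ->; rewrite gderivD. Qed.

Lemma iter_gderiv0 n : iter n gderiv 0 = 0.
Proof. by elim: n => //= n ->; rewrite gderiv0. Qed.

Lemma iter_gderiv_sum n (I : Type) (r : seq I) (P : pred I) (F : I -> Fz) :
  iter n gderiv (\sum_(i <- r | P i) F i) = \sum_(i <- r | P i) iter n gderiv (F i).
Proof. exact: (big_morph _ (iter_gderivD n) (iter_gderiv0 n)). Qed.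

Lemma gderiv_sum (I : Type) (r : seq I) (P : pred I) (F : I -> Fz) :
  gderiv (\sum_(i <- r | P i) F i) = \sum_(i <- r | P i) gderiv (F i).
Proof. exact: (big_morph _ gderivD gderiv0). Qed.

Lemma leibniz n x y : iter n gderiv (x * y) =
  \sum_(l < n.+1) 'C(n, l)%:R * iter l gderiv x * iter (n - l) gderiv y.
Proof.
elim: n => [|n IH]; first by rewrite big_ord_recl big_ord0 addr0 mul1r.
rewrite iterS IH gderiv_sum.
under eq_bigr => l _ do rewrite -mulrA gderiv_natM gderivM mulrDr -!iterS.
rewrite sumrDD.
rewrite [in RHS]big_ord_recl bin0 subn0 mul1r.
under [in RHS]eq_bigr => l _ do rewrite (_ : nat_of_ord (lift ord0 l) = l.+1) // binS natrD mulrDl mulrDl subSS.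
rewrite sumrDD addrA [RHS]addrC; congr (_ + _).
  by apply: eq_bigr => l _; rewrite mulrA.
rewrite [in LHS]big_ord_recl bin0 subn0 mul1r.
rewrite [in RHS]big_ord_recr /= bin_small // mul0r mul0r addr0.
congr (_ + _); apply: eq_bigr => l _.
by rewrite /bump add0n add1n mulrA -(subnSK (ltn_ord l)).
Qed.

Lemma gdactE (D : {poly Fz}) f n : (size D <= n)%N ->
  gdact D f = \sum_(i < n) D`_i * iter i gderiv f.
Proof.
move=> Hn; rewrite /gdact (big_ord_widen n (fun i => D`_i * iter i gderiv f)) //.
rewrite big_mkcond; apply: eq_bigr => i _.
by case: ltnP => // Hi; rewrite nth_default // mul0r.
Qed.

Lemma gdactD (D1 D2 : {poly Fz}) f : gdact (D1 + D2) f = gdact D1 f + gdact D2 f.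
Proof.
set n := maxn (size D1) (size D2).
rewrite !(@gdactE _ _ n) ?leq_maxl ?leq_maxr //; last first.
  by rewrite (leq_trans (size_polyD _ _)).
by rewrite -big_split; apply: eq_bigr => i _; rewrite coefD mulrDl.
Qed.

Lemma gdact0 f : gdact 0 f = 0.
Proof. by rewrite /gdact size_poly0 big_ord0. Qed.

Lemma gdact_sum (I : Type) (r : seq I) (P : pred I) (F : I -> {poly Fz}) f :
  gdact (\sum_(i <- r | P i) F i) f = \sum_(i <- r | P i) gdact (F i) f.
Proof. exact: (big_morph (fun D => gdact D f) (fun a b => gdactD a b f) (gdact0 f)). Qed.

Lemma gdactZX (c : Fz) m f : gdact (c *: 'X^m) f = c * iter m gderiv f.
Proof.
rewrite (@gdactE _ _ m.+1); last by rewrite (leq_trans (size_scale_leq _ _)) // size_polyXn.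
rewrite big_ord_recr /= big1 ?add0r; first by rewrite coefZ coefXn eqxx mulr1.
by move=> i _; rewrite coefZ coefXn (ltn_eqF (ltn_ord i)) mulr0 mul0r.
Qed.

Lemma gdact_gdmul (P R : {poly Fz}) f : gdact (gdmul P R) f = gdact P (gdact R f).
Proof.
rewrite /gdmul gdact_sum [in RHS]/gdact.
apply: eq_bigr => i _.
rewrite gdact_sum iter_gderiv_sum mulr_sumr.
apply: eq_bigr => k _.
rewrite gdact_sum leibniz mulr_sumr.
apply: eq_bigr => l _.
rewrite gdactZX -iterD.
have -> : (i - l + k = i + k - l)%N.
  by rewrite addnBAC // -ltnS ltn_ord.
by rewrite -!mulrA mulrCA.
Qed.

End Gen.


Section Gen2.
Variable K : fieldType.
Hypothesis hK : forall n : nat, (n%:R == 0 :> K) = (n == 0)%N.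
Notation Fz := {fraction {poly K}}.
Notation "x %:F" := (@FracField.tofrac _ x) : ring_scope.

Lemma iter_gderiv_poly n (p : {poly K}) : iter n (@gderiv K) p%:F = (p^`(n))%:F.
Proof. by elim: n => // n IH; rewrite iterS IH gderiv_poly derivnS. Qed.

Lemma fact_neq0 n : (n`!)%:R != 0 :> K.
Proof. by rewrite hK -lt0n fact_gt0. Qed.

Lemma poly_coefs (D : {poly Fz}) :
  (forall p : {poly K}, exists q : {poly K}, gdact D p%:F = q%:F) ->
  forall i, exists q : {poly K}, D`_i = q%:F.
Proof.
move=> H.
suff : forall n, exists qs : nat -> {poly K}, forall k, (k < n)%N -> D`_k = (qs k)%:F.
  by move=> S i; have [qs Hqs] := S i.+1; exists (qs i); apply: Hqs.
elim=> [|n [qs Hqs]]; first by exists (fun _ => 0).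
have [q Hq] := H ('X^n).
set N := maxn (size D) n.+1.
rewrite (@gdactE _ _ _ N) ?leq_maxl // in Hq.
set F := fun k : 'I_N => D`_k * iter k (@gderiv K) ('X^n)%:F.
have E1 : \sum_(k < N) F k = \sum_(k < N | (k < n.+1)%N) F k.
  rewrite [RHS]big_mkcond; apply: eq_bigr => k _; case: ltnP => // Hk.
  by rewrite /F iter_gderiv_poly derivnXn ffact_small // mulr0n tofrac0 mulr0.
rewrite E1 -(big_ord_widen N (fun k => D`_k * iter k (@gderiv K) ('X^n)%:F)) ?leq_maxr // in Hq.
rewrite big_ord_recr /= in Hq.
have E2 : \sum_(k < n) D`_k * iter k (@gderiv K) ('X^n)%:F =
    (\sum_(k < n) qs k * ('X^n)^`(k))%:F.
  rewrite rmorph_sum; apply: eq_bigr => k _.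
  by rewrite Hqs // iter_gderiv_poly rmorphM.
rewrite E2 iter_gderiv_poly derivnXn ffactnn subnn expr0 in Hq.
set c := (n`!)%:R : K.
have c0 : c != 0 by exact: fact_neq0.
have Fc : (c%:P)%:F != 0 :> Fz by rewrite tofrac_eq0 polyC_eq0.
have E3 : D`_n = (q - \sum_(k < n) qs k * ('X^n)^`(k))%:F / (c%:P)%:F.
  apply/(mulIf Fc); rewrite divfK // tofracB polyC_natr -Hq addrC.
  by rewrite addrK.
exists (fun k => if k == n then (q - \sum_(k < n) qs k * ('X^n)^`(k)) * (c^-1)%:P else qs k).
move=> k; rewrite ltnS leq_eqVlt => /orP [/eqP -> | Hk].
  rewrite eqxx E3 tofracM; congr (_ * _).
  by apply/(mulIf Fc); rewrite mulVf // -tofracM -polyCM mulVf // tofrac1.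
by rewrite (ltn_eqF Hk) Hqs.
Qed.
Lemma dvdp_sumr (d : {poly K}) (I : Type) (r : seq I) (P : pred I) (F : I -> {poly K}) :
  (forall i, P i -> d %| F i) -> d %| \sum_(i <- r | P i) F i.
Proof.
move=> H; apply: (big_ind (fun q => d %| q)); [exact: dvdp0 | | exact: H].
by move=> x y; apply: dvdp_add.
Qed.

Lemma taylor_dvd (p : {poly K}) (l : K) N :
  ('X - l%:P) ^+ N %| \sum_(k < N) p^`N(k) * (l%:P - 'X) ^+ k - (p.[l])%:P.
Proof.
set M := maxn N (size p).
have T : (p.[l])%:P = \sum_(k < M) p^`N(k) * (l%:P - 'X) ^+ k.
  have := @nderiv_taylor_wide _ M (p^:P) 'X (l%:P - 'X) (mulrC _ _).
  rewrite size_map_polyC leq_maxr => /(_ isT).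
  rewrite addrC subrK horner_map /= => ->.
  apply: eq_bigr => k _; rewrite nderivn_map.
  by rewrite -[(_^:P).['X]]/(comp_poly 'X _) comp_polyXr.
rewrite T -!(big_mkord xpredT (fun k => p^`N(k) * (l%:P - 'X) ^+ k)).
rewrite (@big_cat_nat _ _ _ N 0 M) ?leq_maxl //= opprD addrA subrr add0r dvdpNr.
have := big_addn 0 M N xpredT (fun k => p^`N(k) * (l%:P - 'X) ^+ k).
rewrite add0n => ->.
apply: dvdp_sumr => k _.
rewrite exprD mulrA; apply: dvdp_mull.
rewrite -[l%:P - 'X]opprB exprNn; exact: dvdp_mull.
Qed.
Lemma dvdp_prod_factor (I : eqType) (r : seq I) (P : pred I) (F : I -> {poly K}) i0 :
  i0 \in r -> P i0 -> F i0 %| \prod_(i <- r | P i) F i.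
Proof.
elim: r => // a r IH; rewrite inE big_cons => /orP [/eqP <- ->| Hi Pi].
  exact: dvdp_mulr.
by case: (P a); [apply: dvdp_mull|]; apply: IH.
Qed.

Section CRT.
Variable lams : seq K.
Variable N : nat.

Definition Pl (l : K) : {poly K} := \prod_(m <- lams | m != l) ('X - m%:P) ^+ N.

Lemma bez_ex l : exists u : {poly K} * {poly K}, u.1 * Pl l + u.2 * ('X - l%:P) ^+ N == 1.
Proof.
have cop : coprimep (Pl l) (('X - l%:P) ^+ N).
  apply: coprimep_expr; rewrite coprimep_XsubC rootE /Pl horner_prod prodf_seq_neq0.
  apply/allP => m _; apply/implyP => ml.
  by rewrite horner_exp hornerXsubC expf_neq0 // subr_eq0 eq_sym.
by have [u Hu] := Bezout_eq1_coprimepP _ _ cop; exists u; rewrite Hu.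
Qed.

Definition eP l : {poly K} := (xchoose (bez_ex l)).1 * Pl l.

Lemma eP_1 l : exists w, eP l = 1 - w * ('X - l%:P) ^+ N.
Proof.
rewrite /eP; move: (xchooseP (bez_ex l)); move: (xchoose (bez_ex l)) => [a b] /= /eqP Hu.
by exists b; rewrite -Hu addrK.
Qed.

Lemma eP_dvd l l0 : l0 \in lams -> l0 != l -> ('X - l0%:P) ^+ N %| eP l.
Proof.
move=> H1 H2; apply: dvdp_mull; exact: (dvdp_prod_factor (fun m => ('X - m%:P) ^+ N) H1 H2).
Qed.

Hypothesis Hu : uniq lams.
Hypothesis HN : (0 < N)%N.

Definition tau (l : K) k : {poly K} := ((k`!)%:R)^-1 *: (l%:P - 'X) ^+ k.
Definition tt k : {poly K} := (k == 0)%:R + \sum_(l <- lams) eP l * (tau l k - (k == 0)%:R).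

Lemma tt0 : tt 0 = 1.
Proof.
rewrite /tt eqxx big1 ?addr0 // => l _.
by rewrite /tau expr0 fact0 invr1 scale1r subrr mulr0.
Qed.

Lemma delta_sum (p : {poly K}) : \sum_(k < N) ((k : nat) == 0)%:R * p^`(k) = p.
Proof.
case: N HN => // N' _; rewrite big_ord_recl /= mul1r big1 ?addr0 //.
by move=> k _; rewrite mul0r.
Qed.

Lemma tau_nderiv (p : {poly K}) l k : tau l k * p^`(k) = p^`N(k) * (l%:P - 'X) ^+ k.
Proof.
rewrite /tau nderivn_def -mul_polyC -[p^`N(k) *+ _]mulr_natr -(@polyC_natr K (k`!)).
transitivity ((((k`!)%:R)^-1)%:P * ((k`!)%:R)%:P * (p^`N(k) * (l%:P - 'X) ^+ k)); first by ring.
by rewrite -polyCM mulVf ?fact_neq0 // mul1r.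
Qed.

Lemma G_eq (p : {poly K}) : \sum_(k < N) tt k * p^`(k) =
  p + \sum_(l <- lams) eP l * (\sum_(k < N) p^`N(k) * (l%:P - 'X) ^+ k - p).
Proof.
under eq_bigr => k _ do rewrite /tt mulrDl.
rewrite sumrDD delta_sum; congr (_ + _).
under eq_bigr => k _ do rewrite mulr_suml.
rewrite exchange_big /=; apply: eq_bigr => l _.
under eq_bigr => k _ do rewrite -mulrA mulrBl tau_nderiv.
by rewrite -mulr_sumr sumrB delta_sum.
Qed.

Lemma G_dvd (p : {poly K}) l0 : l0 \in lams ->
  ('X - l0%:P) ^+ N %| \sum_(k < N) tt k * p^`(k) - (p.[l0])%:P.
Proof.
move=> Hl0; rewrite G_eq (bigD1_seq l0) //=.
set T0 := \sum_(k < N) p^`N(k) * (l0%:P - 'X) ^+ k.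
set S := \sum_(i <- lams | i != l0) _.
have [w Hw] := eP_1 l0; rewrite Hw.
have -> : p + ((1 - w * ('X - l0%:P) ^+ N) * (T0 - p) + S) - (p.[l0])%:P =
   (T0 - (p.[l0])%:P) + (- (w * (T0 - p))) * ('X - l0%:P) ^+ N + S by ring.
rewrite -addrA; apply: dvdp_add; first exact: taylor_dvd.
apply: dvdp_add; first exact: dvdp_mull.
apply: dvdp_sumr => l Hl; apply: dvdp_mulr; apply: eP_dvd => //; by rewrite eq_sym.
Qed.
End CRT.
End Gen2.


Section Gen3.
Variable K : fieldType.
Hypothesis hK : forall n : nat, (n%:R == 0 :> K) = (n == 0)%N.
Notation Fz := {fraction {poly K}}.
Notation "x %:F" := (@FracField.tofrac _ x) : ring_scope.

Lemma gdactC (x : Fz) f : gdact x%:P f = x * f.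
Proof.
rewrite (@gdactE _ _ _ 1) ?size_polyC ?leq_b1 //.
by rewrite big_ord_recl big_ord0 addr0 coefC.
Qed.

Lemma uniform_N (lams : seq K) (V : K -> {poly K} -> Prop) :
  (forall l, l \in lams -> exists r : nat, forall p, V l (('X - l%:P) ^+ r * p)) ->
  exists N, (0 < N)%N /\ forall l, l \in lams -> forall p, V l (('X - l%:P) ^+ N * p).
Proof.
elim: lams => [|a s IH] H; first by exists 1%N.
have [ra Ha] := H a (mem_head _ _).
have [Ns [Ns0 HNs]] := IH (fun l Hl => H l (mem_behead (s:=a :: s) Hl)).
exists (ra + Ns)%N; split; first by rewrite addn_gt0 Ns0 orbT.
move=> l; rewrite inE => /orP [/eqP -> | Hl] p.
  by rewrite exprD -mulrA.
by rewrite addnC exprD -mulrA; apply: HNs.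
Qed.

Lemma gdmulE (P R : {poly Fz}) n1 n2 : (size P <= n1)%N -> (size R <= n2)%N ->
  gdmul P R = \sum_(i < n1) \sum_(k < n2) \sum_(l < i.+1)
     ('C(i, l)%:R * P`_i * iter l (@gderiv K) R`_k) *: 'X^(i + k - l).
Proof.
move=> h1 h2; rewrite /gdmul.
rewrite (big_ord_widen n1 (fun i : nat => \sum_(k < size R) \sum_(l < i.+1)
     ('C(i, l)%:R * P`_i * iter l (@gderiv K) R`_k) *: 'X^(i + k - l)) h1).
rewrite big_mkcond; apply: eq_bigr => i _.
case: ltnP => Hi; last first.
  rewrite big1 // => k _; rewrite big1 // => l _.
  by rewrite nth_default // mulr0 mul0r scale0r.
rewrite (big_ord_widen n2 (fun k : nat => \sum_(l < i.+1)
     ('C(i, l)%:R * P`_i * iter l (@gderiv K) R`_k) *: 'X^(i + k - l)) h2).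
rewrite big_mkcond; apply: eq_bigr => k _.
case: ltnP => Hk //.
rewrite big1 // => l _.
by rewrite (nth_default _ Hk) iter_gderiv0 mulr0 scale0r.
Qed.

Lemma coefC0 (x : Fz) : x%:P`_0 = x.
Proof. by have := coefC x 0; rewrite eqxx. Qed.

Lemma gdmulC (x y : Fz) : gdmul x%:P y%:P = (x * y)%:P.
Proof.
rewrite (@gdmulE _ _ 1 1) ?size_polyC ?leq_b1 //.
rewrite big_ord1 big_ord1 big_ord1 bin0 mul1r.
transitivity ((x * y) *: 'X^0).
  by congr (_ *: _); congr (_ * _); apply: coefC0.
by rewrite expr0 alg_polyC.
Qed.

Lemma gdact_one (a : {poly Fz}) : gdact a 1 = a`_0.
Proof.
rewrite (@gdactE _ _ _ (size a).+1) // big_ord_recl mulr1 big1 ?addr0 //.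
move=> i _; rewrite -tofrac1 iter_gderiv_poly derivn_poly0 ?tofrac0 ?mulr0 //.
by rewrite size_poly1.
Qed.

Section Wsec.
Variable lams : seq K.
Hypothesis Hu : uniq lams.
Variable Vs : K -> {poly K} -> Prop.
Variable N : nat.
Hypothesis HN : (0 < N)%N.
Hypothesis HV0 : forall l, l \in lams -> forall p q, Vs l p -> Vs l q -> Vs l (p + q).
Hypothesis HVZ : forall l, l \in lams -> forall (c : K) p, Vs l p -> Vs l (c *: p).
Hypothesis HVN : forall l, l \in lams -> forall p, Vs l (('X - l%:P) ^+ N * p).
Variable m : {poly K}.
Hypothesis m0 : m != 0.

Definition Wg (f : Fz) := exists v : {poly K}, (forall l, l \in lams -> Vs l v) /\ f = v%:F / m%:F.

Definition Eop (v : {poly K}) : {poly Fz} := \poly_(k < N) ((v * tt lams N k)%:F / m%:F).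

Lemma Eop_act v p : gdact (Eop v) p%:F = (v * \sum_(k < N) tt lams N k * p^`(k))%:F / m%:F.
Proof.
rewrite (@gdactE _ _ _ N) ?size_poly //.
rewrite mulr_sumr rmorph_sum mulr_suml; apply: eq_bigr => k _.
by rewrite coef_poly ltn_ord iter_gderiv_poly !rmorphM mulrAC -!mulrA.
Qed.

Lemma Eop_1 v : gdact (Eop v) 1 = v%:F / m%:F.
Proof.
rewrite -tofrac1 Eop_act.
have -> : \sum_(k < N) tt lams N k * (1 : {poly K})^`(k) = 1.
  case: N HN => // N' _; rewrite big_ord_recl tt0 derivn0 mul1r big1 ?addr0 //.
  by move=> k _; rewrite derivn_poly0 ?mulr0 // size_poly1.
by rewrite mulr1.
Qed.

Lemma Eop_W v : (forall l, l \in lams -> Vs l v) -> forall p, Wg (gdact (Eop v) p%:F).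
Proof.
move=> Hv p; rewrite Eop_act; eexists; split; last reflexivity.
move=> l Hl.
have /dvdpP [h Hh] := G_dvd hK Hu HN p Hl.
set G := \sum_(k < N) _ in Hh *.
have -> : v * G = (p.[l]) *: v + ('X - l%:P) ^+ N * (v * h).
  rewrite -mul_polyC -(subrK (p.[l])%:P G) Hh; ring.
apply: HV0 => //; first by apply: HVZ => //; apply: Hv.
exact: HVN.
Qed.

Definition cN : {poly K} := \prod_(l <- lams) ('X - l%:P) ^+ N.

Lemma cN_W p : Wg (gdact ((cN%:F / m%:F)%:P) p%:F).
Proof.
rewrite gdactC; exists (cN * p); split; last by rewrite tofracM mulrAC.
move=> l Hl; rewrite /cN (bigD1_seq l) //= -mulrA; exact: HVN.
Qed.

End Wsec.
End Gen3.

Lemma prod_XsubC_neq0 (K : fieldType) (lams : seq K) (ns : K -> nat) :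
  \prod_(l <- lams) ('X - l%:P) ^+ ns l != 0.
Proof.
rewrite prodf_seq_neq0; apply/allP => l _ /=.
by rewrite expf_neq0 // polyXsubC_eq0.
Qed.


Lemma hCC (n : nat) : (n%:R == 0 :> CC) = (n == 0)%N.
Proof. exact: (@pnatr_eq0 (Rdefinitions.R[i])). Qed.

Theorem lemma5p3 (W : Cz -> Prop) (HW : in_Grad W)
  (Q : unitRingType) (j : DOp -> Q) (Hj : is_quot_skew_field j) :
  forall q : Q,
    (exists D : DOp, L_W W D /\ q = j D) <->
    (forall D : DOp, R_W W D -> exists a : DOp, in_A1 a /\ q * j D = j a).
Proof.
have [_ [jinj [j1 [jD [jM _]]]]] := Hj.
move=> q; split.
  move=> [D [HL ->]] E HR; exists (dmul D E); split; last by rewrite jM.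
  apply: (poly_coefs hCC) => p.
  rewrite (gdact_gdmul D E p%:F).
  by apply: HL; apply: HR.
move=> H.
have [lams [Vs [ns [Hu [Hprop HWc]]]]] := HW.
have [N [HN HVN]] := uniform_N (fun l Hl => proj1 (proj2 (Hprop l Hl))).
have HV0 : forall l, l \in lams -> forall p q, Vs l p -> Vs l q -> Vs l (p + q).
  by move=> l Hl; have [[_ [Ha _]] _] := Hprop l Hl.
have HVZ : forall l, l \in lams -> forall (c : CC) p, Vs l p -> Vs l (c *: p).
  by move=> l Hl; have [[_ [_ Hz]] _] := Hprop l Hl.
set m := \prod_(l <- lams) ('X - l%:P) ^+ ns l.
have m0 : m != 0 := prod_XsubC_neq0 lams ns.
set c := cN lams N.
have c0 : c != 0 := prod_XsubC_neq0 lams (fun _ => N).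
set x := c%:F / m%:F.
have x0 : x != 0 by rewrite mulf_neq0 ?invr_eq0 ?tofrac_eq0.
set g : DOp := x%:P.
have HRg : R_W W g := fun p => (HWc _).2 (cN_W Hu HVN m p).
have [a [Ha Hqa]] := H g HRg.
set gi : DOp := (x^-1)%:P.
have ggi : dmul g gi = 1.
  have -> : dmul g gi = (x * x^-1)%:P := gdmulC x x^-1.
  by rewrite mulfV.
have Hq : q = j (dmul a gi).
  by rewrite jM -Hqa -mulrA -jM ggi j1 mulr1.
exists (dmul a gi); split => //.
move=> f /(HWc f).1 [v [Hv ->]].
set E : DOp := Eop lams N m v.
have HRE : R_W W E := fun p => (HWc _).2 (Eop_W hCC Hu HN HV0 HVZ HVN m Hv p).
have [a' [Ha' Hqa']] := H E HRE.
have DE : dmul (dmul a gi) E = a'.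
  by apply: jinj; rewrite jM -Hq.
have -> : v%:F / m%:F = dact E 1 := esym (Eop_1 lams HN m v).
have -> : dact (dmul a gi) (dact E 1) = dact (dmul (dmul a gi) E) 1 :=
  esym (gdact_gdmul (dmul a gi) E 1).
rewrite DE.
have -> : dact a' 1 = a'`_0 := gdact_one a'.
exact: Ha' 0%N.
Qed.
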